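(* For $a>0$, $S>0$, $\sigma=e^{-aS}$, the scaling function $\mathcal F(S,a,\lambda)$ (defined in the context) satisfies $$\mathcal F(S,a,0)=\frac{2a^3\sigma^2(1+\sigma^2)}{(1-\sigma^2)^3},\qquad \frac{\partial}{\partial\lambda}\mathcal F(S,a,\lambda)\Big|_{\lambda=0}=-\frac{a\,\sigma^2(385-189\sigma+154\sigma^2+54\sigma^3-11\sigma^4-9\sigma^5)}{70(1-\sigma)(1+\sigma)^4}.$$
   Context: For $a>0$, $\lambda\ge0$, let $A=\sqrt{1+3\lambda/a^2}$, $\sigma=e^{-aS}$, $W(\sigma,A)=4A^3(1-\sigma)^3+12A^2(1-\sigma)^2(1+\sigma)+A(1-\sigma)(11+38\sigma+11\sigma^2)+3(1+\sigma)(1+8\sigma+\sigma^2)$, $U(\sigma,A)=2A^2(1-\sigma)^2+5A(1-\sigma)(1+\sigma)+3(1+3\sigma+\sigma^2)$, $Y(S,a,\lambda)=a\bigl(-3A-36\,\sigma U/((1-\sigma)W)\bigr)$. Let $H(S,a,\lambda)$ be the unique solution on $S\in(0,\infty)$ of $6\partial_S H+4YH+(\partial_S Y)^2=0$ with $H\to0$ as $S\to\infty$, and $\mathcal F(S,a,\lambda)=H(S,a,\lambda)/3$. *)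

(* Defs.v *)
From Stdlib Require Import Reals Lra.
Open Scope R_scope.

Definition Acoef (a l : R) : R := sqrt (1 + 3 * l / a ^ 2).

Definition Wfun (s A : R) : R :=
  4 * A ^ 3 * (1 - s) ^ 3 + 12 * A ^ 2 * (1 - s) ^ 2 * (1 + s)
  + A * (1 - s) * (11 + 38 * s + 11 * s ^ 2)
  + 3 * (1 + s) * (1 + 8 * s + s ^ 2).

Definition Ufun (s A : R) : R :=
  2 * A ^ 2 * (1 - s) ^ 2 + 5 * A * (1 - s) * (1 + s) + 3 * (1 + 3 * s + s ^ 2).

Definition Yfun (S a l : R) : R :=
  let A := Acoef a l in
  let s := exp (- a * S) in
  a * (- 3 * A - 36 * s * Ufun s A / ((1 - s) * Wfun s A)).

Definition IsSolH (a l : R) (h : R -> R) : Prop :=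
  (forall S, 0 < S ->
     exists dY dh,
       derivable_pt_lim (fun t => Yfun t a l) S dY /\
       derivable_pt_lim h S dh /\
       6 * dh + 4 * Yfun S a l * h S + dY ^ 2 = 0) /\
  (forall eps, 0 < eps -> exists M, forall S, M < S -> Rabs (h S) < eps).

Definition Fcal (H : R -> R -> R) (S l : R) : R := H S l / 3.

(* Main.v *)
Require Import Defs.
From Stdlib Require Import Reals Lra List.
From Coquelicot Require Import Coquelicot.
Import ListNotations.
Open Scope R_scope.

Fixpoint peval (l : list R) (x : R) : R :=
  match l with nil => 0 | c :: l' => c + x * peval l' x end.
Fixpoint peval2 (L : list (list R)) (x y : R) : R :=
  match L with nil => 0 | l :: L' => peval l y + x * peval2 L' x y end.

Definition phi s A := s * Ufun s A / ((1 - s) * Wfun s A).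
Definition dUf s A := -4*A^2*(1-s) - 10*A*s + 9 + 6*s.
Definition dWf s A := -12*A^3*(1-s)^2 + 12*A^2*(-2*(1-s)*(1+s) + (1-s)^2)
  + A*(-(11+38*s+11*s^2) + (1-s)*(38+22*s)) + 3*((1+8*s+s^2) + (1+s)*(8+2*s)).
Definition dNp s A := (Ufun s A + s * dUf s A) * ((1-s)*Wfun s A)
   - s*Ufun s A * (- Wfun s A + (1-s)*dWf s A).
Definition dphi s A := dNp s A / ((1-s)^2 * Wfun s A ^ 2).
Definition h0 s := 6*s^2*(1+s^2)/((1-s)^3*(1+s)^3).
Definition dh0 s := 12*s*(1+4*s^2+s^4)/((1-s)^4*(1+s)^4).
Definition Pp s := 385 - 189*s + 154*s^2 + 54*s^3 - 11*s^4 - 9*s^5.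
Definition g s := - (s^2 * Pp s) / (35*(1-s)*(1+s)^4).
Definition Pgp s := -770*s + 1722*s^2 - 2338*s^3 + 570*s^4 + 74*s^5 + 30*s^6 - 38*s^7 - 18*s^8.
Definition dg s := Pgp s / (35*(1-s)^2*(1+s)^5).
Definition fexpr s A u := 1296*s^2*dphi s A^2 - 6*s*(dh0 s + u*dg s)
   + 4*(-3*A - 36*phi s A)*(h0 s + u*g s).
Definition NL : list (list R) :=
  [[];
   [];
   [9185400000; 52723440000; 138374964000; 219634850400; 234869790540; 178307431680; 98562730560; 39978408960; 11811623040; 2479411200; 351052800; 30105600; 1182720];
   [(-19527480000); (-174952008000); (-622327204800); (-1242589439280); (-1595524065828); (-1408522363584); (-884242099776); (-399980448000); (-129885372288); (-29611115520); (-4508120064); (-412188672); (-17138688)];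
   [(-38279304000); (-19287676800); 647121721680; 2386411631184; 4249021815192; 4677211710528; 3464852455680; 1787825458944; 647118017280; 161685629952; 26628919296; 2606628864; 115046400];
   [25178040000; 290959344000; 345785576400; (-1553337822960); (-5572027149096); (-8513545580352); (-7805207351040); (-4712326205184); (-1929891071232); (-533434678272); (-95619969024); (-10061438976); (-472664064)];
   [37368864000; (-31648341600); (-679717378800); (-390057861288); 3609040319052; 9328001687616; 11226373330368; 8148157074432; 3832472462976; 1182486567936; 232007605248; 26335832064; 1319709696];
   [14951952000; (-51407244000); 168338359440; 841973613384; (-885869167044); (-6479677706880); (-10908090884544); (-9745139969280); (-5328543996288); (-1848173463552); (-398527687680); (-48905336832); (-2615854080)];
   [(-1398384000); (-95395363200); (-261039939840); (-666254877840); (-312615934176); 3050428435200; 7517379353088; 8318338122240; 5299633069056; 2067931459584; 489785401344; 64843149312; 3688636416];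
   [(-26844048000); (-57809635200); 272620169280; 865272840432; 822289019424; (-991143303936); (-3959778181632); (-5227663025664); (-3776818885632); (-1626505949184); (-416298393600); (-58469191680); (-3468288000)];
   [(-1073736000); 95925060000; 89576598960; (-563622710640); (-1003354745448); 26059686144; 1826781382272; 2610304501248; 1914589847808; 825354350592; 207675439104; 27773276160; 1484593152];
   [5814504000; (-21505845600); (-139583713680); 101031062640; 682707344184; 313706204544; (-863238718080); (-1275636519936); (-734080331520); (-180512913408); 2268628992; 9801093120; 1377073152];
   [(-6908328000); 1217116800; 83419611840; 49801213776; (-343002479472); (-376271981184); 358996727808; 738445307904; 328818387456; (-66598164480); (-102725591040); (-32294326272); (-3457658880)];
   [380376000; 17050262400; (-31920572160); (-105857410224); 96227176464; 321675885696; 1130425344; (-388326933504); (-241051276800); 46479046656; 92613206016; 32456306688; 3769159680];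
   [1165104000; (-3739111200); (-19750986000); 53957764224; 62703179256; (-131898678912); (-141997293696); 96948112896; 149526561024; 15063017472; (-42464483328); (-19900588032); (-2697676800)];
   [36288000; (-2399652000); 7573572720; 11681925600; (-46595127336); (-16941245952); 77024386176; 32905921536; (-44176469760); (-24946065408); 8298829824; 7754539008; 1336793088];
   [(-59616000); 219715200; 2020587840; (-7900916016); (-2299125984); 26029081344; (-410755584); (-28483305984); (-6212809728); 7915450368; 1209311232; (-1655058432); (-440328192)];
   [10368000; 64195200; (-495348480); (-473986224); 4898558496; (-2017020672); (-10291459584); 2706642432; 8562465792; 2072088576; (-418897920); 91607040; 83435520];
   [0; (-14839200); (-4424400); 363437328; (-389216868); (-1718777856); 2015806272; 2718217728; (-1689342336); (-2248679424); (-597531648); (-46362624); (-8365056)];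
   [0; 583200; 9141840; (-32773440); (-96276372); 325081920; 222330048; (-827640576); (-328102272); 608885760; 428485632; 87502848; 5606400];
   [0; 0; (-755280); (-760800); 16937880; (-6498240); (-89035008); 49824000; 163977984; (-35238912); (-120827904); (-45576192); (-4786176)];
   [0; 0; 19440; 231264; (-864552); (-2205504); 6986496; 7250688; (-19254528); (-11344896); 15126528; 11317248; 1849344];
   [0; 0; 0; (-11736); 11580; 161856; (-133440); (-815616); 489600; 1760256; (-476160); (-1345536); (-353280)];
   [0; 0; 0; 216; 108; (-3456); (-1728); 20736; 10368; (-55296); (-27648); 55296; 27648]].

Lemma fexpr_id s u : 1 - s <> 0 -> 1 + s <> 0 -> Wfun s (1+u) <> 0 ->
  35 * fexpr s (1+u) u * ((1-s)^4*(1+s)^5*Wfun s (1+u)^4) = u^2 * peval2 NL s u.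
Proof.
  intros h1 h2 h3.
  unfold fexpr, dphi, dNp, phi, dh0, dg, h0, g, Pgp, Pp, dUf, dWf.
  field_simplify_eq; [|auto..].
  unfold Wfun, Ufun, NL, peval2, peval.
  ring.
Qed.

Ltac nz := repeat split; try exact I;
  match goal with
  | |- ?X <> 0 => first
     [ let E := fresh in intro E; match goal with H : ?Y <> 0 |- _ => apply H; rewrite <- E; ring end
     | apply Rmult_integral_contrapositive_currified; nz
     | apply pow_nonzero; nz
     | lra ]
  end.



Lemma phi_der s A : 1 - s <> 0 -> Wfun s A <> 0 ->
  is_derive (fun s => phi s A) s (dphi s A).
Proof.
  intros h1 h2. unfold phi, dphi, dNp, dUf, dWf.
  unfold Wfun in *. unfold Ufun.
  auto_derive; [nz|]. field. nz.
Qed.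

Lemma h0_der s : 1 - s <> 0 -> 1 + s <> 0 -> is_derive h0 s (dh0 s).
Proof.
  intros h1 h2. unfold h0, dh0. auto_derive.
  - nz.
  - field. nz.
Qed.

Lemma g_der s : 1 - s <> 0 -> 1 + s <> 0 -> is_derive g s (dg s).
Proof.
  intros h1 h2. unfold g, dg, Pp, Pgp. auto_derive.
  - nz.
  - field. nz.
Qed.

Lemma cont_of_der (f : R -> R) (df t : R) : is_derive f t df -> continuity_pt f t.
Proof.
  intro H. apply continuity_pt_filterlim. apply (ex_derive_continuous (K:=R_AbsRing) (V:=R_NormedModule)). exists df; exact H.
Qed.

Lemma mono_dec (f df : R -> R) S0 t : 0 < S0 -> S0 <= t ->
  (forall x, 0 < x -> is_derive f x (df x)) ->
  (forall x, S0 <= x -> df x <= 0) -> f t <= f S0.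
Proof.
  intros h0 ht hd hs.
  destruct (Req_dec t S0) as [->|ne]; [lra|].
  destruct (MVT_gen f S0 t df) as [c [hc e]].
  - intros x hx. apply hd. rewrite Rmin_left in hx by lra. lra.
  - intros x hx. rewrite Rmin_left in hx by lra. apply (cont_of_der _ (df x)); apply hd; lra.
  - rewrite Rmin_left in hc by lra. rewrite Rmax_right in hc by lra.
    assert (df c <= 0) by (apply hs; lra).
    assert (df c * (t - S0) <= 0). { apply Rmult_le_0_r; lra. } lra.
Qed.

Lemma der_expc (J : R -> R) (k t dJ : R) : is_derive J t dJ ->
  is_derive (fun x => exp (k * J x)) t (k * dJ * exp (k * J t)).
Proof.
  intro H.
  assert (H2 : is_derive (fun y => exp (k*y)) (J t) (k * exp (k * J t))).
  { auto_derive; [exact I | ring]. }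
  generalize (is_derive_comp _ _ _ _ _ H2 H). unfold scal; simpl; unfold mult; simpl.
  intro H3. replace (k*dJ*exp (k * J t)) with (dJ * (k*exp (k * J t))) by ring. exact H3.
Qed.

Lemma comparison (S0 c M : R) (Rf Y Fr dR : R -> R) :
  0 < S0 -> 0 < c -> 0 <= M ->
  (forall t, 0 < t -> is_derive Rf t (dR t)) ->
  (forall t, 0 < t -> continuous Y t) ->
  (forall t, 0 < t -> 6 * dR t + 4 * Y t * Rf t + Fr t = 0) ->
  (forall t, S0 <= t -> Y t <= - c) ->
  (forall t, S0 <= t -> Rabs (Fr t) <= M) ->
  (forall eps, 0 < eps -> exists T, forall t, T < t -> Rabs (Rf t) < eps) ->
  Rabs (Rf S0) <= M / (4 * c).
Proof.
  intros hS0 hc hM hdR hY hode hYc hF hlim.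
  set (k := M / (4 * c)).
  assert (hk : 0 <= k) by (unfold k; apply Rdiv_le_0_compat; lra).
  set (J := fun x => RInt Y S0 x).
  assert (hJ : forall t, 0 < t -> is_derive J t (Y t)).
  { intros t ht. apply (is_derive_RInt Y J S0 t); [|apply hY; exact ht].
    assert (ht2 : 0 < t / 2) by lra.
    exists (mkposreal _ ht2). intros b Hb.
    change (Rabs (b - t) < t / 2) in Hb.
    apply (RInt_correct Y S0 b). apply (ex_RInt_continuous Y S0 b). intros z Hz. apply hY.
    apply Rabs_lt_between' in Hb.
    assert (0 < Rmin S0 b) by (apply Rmin_glb_lt; lra). lra. }
  set (I := fun x => exp (2/3 * J x)).
  assert (hI : forall t, 0 < t -> is_derive I t (2/3 * Y t * I t)).
  { intros t ht. unfold I.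
    replace (2/3 * Y t * exp (2/3 * J t)) with (2/3 * Y t * exp (2/3 * J t)) by ring.
    apply der_expc. apply hJ; exact ht. }
  assert (hJ0 : J S0 = 0) by (unfold J; apply (RInt_point (V:=R_CompleteNormedModule))).
  assert (hI0 : I S0 = 1) by (unfold I; rewrite hJ0; rewrite Rmult_0_r; apply exp_0).
  assert (hIle : forall t, S0 <= t -> 0 < I t <= 1).
  { intros t ht. split. apply exp_pos.
    assert (J t <= J S0).
    { apply (mono_dec J Y S0 t hS0 ht hJ). intros x hx. assert (Y x <= -c) by auto. lra. }
    rewrite hJ0 in H. unfold I. rewrite <- exp_0. destruct (Req_dec (J t) 0) as [e|ne].
    rewrite e, Rmult_0_r; lra. left. apply exp_increasing. lra. }
  assert (h1 : forall t, S0 <= t -> I t * (Rf t + k) <= Rf S0 + k).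
  { intros t ht.
    replace (Rf S0 + k) with (I S0 * (Rf S0 + k)) by (rewrite hI0; ring).
    apply (mono_dec (fun x => I x * (Rf x + k)) (fun x => I x * (2/3 * Y x * k - Fr x / 6)) S0 t hS0 ht).
    - intros x hx. 
      assert (D := is_derive_mult I (fun x => Rf x + k) x _ _ (hI x hx)
                      (is_derive_plus Rf (fun _ => k) x _ _ (hdR x hx) (is_derive_const k x))).
      eapply is_derive_ext_loc; [apply filter_forall; intro; reflexivity|].
      replace (I x * (2/3 * Y x * k - Fr x / 6)) with
         (plus (mult (2 / 3 * Y x * I x) (Rf x + k)) (mult (I x) (plus (dR x) zero))).
      { apply D. intros; unfold mult; simpl; ring. }
      unfold plus, mult, zero; simpl. specialize (hode x hx). 
      replace (dR x) with (-(4 * Y x * Rf x + Fr x)/6) by lra. field.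
    - intros x hx. assert (0 < I x <= 1) by auto.
      assert (Y x <= - c) by auto. assert (Rabs (Fr x) <= M) by auto.
      apply Rabs_le_between in H1.
      assert (2/3 * Y x * k <= - M / 6).
      { unfold k. assert (2/3 * (Y x) * (M / (4*c)) <= 2/3 * (- c) * (M/(4*c))).
        apply Rmult_le_compat_r; [exact hk| lra]. 
        replace (2/3 * (-c) * (M / (4*c))) with (- M / 6) in H2 by (field; lra). exact H2. }
      assert (2 / 3 * Y x * k - Fr x / 6 <= 0) by lra.
      apply Rmult_le_0_l; lra. }
  assert (h2 : forall t, S0 <= t -> Rf S0 - k <= I t * (Rf t - k)).
  { intros t ht.
    cut (- (I t * (Rf t - k)) <= - (I S0 * (Rf S0 - k))). { rewrite hI0. lra. }
    apply (mono_dec (fun x => - (I x * (Rf x - k))) (fun x => I x * (2/3 * Y x * k + Fr x / 6)) S0 t hS0 ht).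
    - intros x hx. 
      assert (D := is_derive_opp _ x _ (is_derive_mult I (fun x => Rf x - k) x _ _ (hI x hx)
                      (is_derive_minus Rf (fun _ => k) x _ _ (hdR x hx) (is_derive_const k x)) (fun n m => Rmult_comm n m))).
      eapply is_derive_ext_loc; [apply filter_forall; intro; reflexivity|].
      replace (I x * (2/3 * Y x * k + Fr x / 6)) with
         (opp (plus (mult (2 / 3 * Y x * I x) (Rf x - k)) (mult (I x) (minus (dR x) zero)))).
      { eapply is_derive_ext; [|apply D]. intros; reflexivity. }
      unfold opp, plus, minus, mult, zero; simpl. unfold plus, opp; simpl. specialize (hode x hx). 
      replace (dR x) with (-(4 * Y x * Rf x + Fr x)/6) by lra. field.
    - intros x hx. assert (0 < I x <= 1) by auto.
      assert (Y x <= - c) by auto. assert (Rabs (Fr x) <= M) by auto.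
      apply Rabs_le_between in H1.
      assert (2/3 * Y x * k <= - M / 6).
      { unfold k. assert (2/3 * (Y x) * (M / (4*c)) <= 2/3 * (- c) * (M/(4*c))).
        apply Rmult_le_compat_r; [exact hk| lra]. 
        replace (2/3 * (-c) * (M / (4*c))) with (- M / 6) in H2 by (field; lra). exact H2. }
      assert (2 / 3 * Y x * k + Fr x / 6 <= 0) by lra.
      apply Rmult_le_0_l; lra. }
  assert (hpos : 0 <= Rf S0 + k /\ Rf S0 - k <= 0).
  { split; apply Rnot_lt_le; intro hn.
    - destruct (hlim (-(Rf S0 + k)/2)) as [T hT]; [lra|].
      set (t := Rmax T S0 + 1).
      assert (ht : S0 <= t) by (unfold t; generalize (Rmax_r T S0); lra).
      assert (hT' : T < t) by (unfold t; generalize (Rmax_l T S0); lra).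
      specialize (hT t hT'). specialize (h1 t ht). specialize (hIle t ht).
      apply Rabs_lt_between in hT.
      assert (I t * (Rf t + k) >= I t * Rf t) by (assert (I t * k >= 0) by (apply Rle_ge, Rmult_le_pos; lra); lra).
      assert (I t * Rf t >= - (-(Rf S0 + k)/2)).
      { destruct (Rle_dec 0 (Rf t)). assert (0 <= I t * Rf t) by (apply Rmult_le_pos; lra). lra.
        assert (I t * Rf t >= 1 * Rf t) by nra. lra. }
      lra.
    - destruct (hlim ((Rf S0 - k)/2)) as [T hT]; [lra|].
      set (t := Rmax T S0 + 1).
      assert (ht : S0 <= t) by (unfold t; generalize (Rmax_r T S0); lra).
      assert (hT' : T < t) by (unfold t; generalize (Rmax_l T S0); lra).
      specialize (hT t hT'). specialize (h2 t ht). specialize (hIle t ht).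
      apply Rabs_lt_between in hT.
      assert (I t * (Rf t - k) <= I t * Rf t) by (assert (I t * k >= 0) by (apply Rle_ge, Rmult_le_pos; lra); lra).
      assert (I t * Rf t <= (Rf S0 - k)/2).
      { destruct (Rle_dec 0 (Rf t)). assert (I t * Rf t <= 1 * Rf t) by (apply Rmult_le_compat_r; lra). lra.
        assert (I t * Rf t <= 0) by (apply Rmult_le_0_l; lra). lra. }
      lra. }
  apply Rabs_le. fold k. lra.
Qed.

Fixpoint pabs (l : list R) : R := match l with nil => 0 | c :: l' => Rabs c + pabs l' end.
Fixpoint pabs2 (L : list (list R)) : R := match L with nil => 0 | l :: L' => pabs l + pabs2 L' end.

Lemma peval_bound l x : Rabs x <= 1 -> Rabs (peval l x) <= pabs l.
Proof.
  intro hx. induction l as [|c l IH]; simpl.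
  - rewrite Rabs_R0; lra.
  - eapply Rle_trans; [apply Rabs_triang|]. rewrite Rabs_mult.
    assert (Rabs x * Rabs (peval l x) <= 1 * pabs l).
    { apply Rmult_le_compat; auto using Rabs_pos. }
    lra.
Qed.

Lemma peval2_bound L x y : Rabs x <= 1 -> Rabs y <= 1 -> Rabs (peval2 L x y) <= pabs2 L.
Proof.
  intros hx hy. induction L as [|l L IH]; simpl.
  - rewrite Rabs_R0; lra.
  - eapply Rle_trans; [apply Rabs_triang|]. rewrite Rabs_mult.
    assert (Rabs x * Rabs (peval2 L x y) <= 1 * pabs2 L).
    { apply Rmult_le_compat; auto using Rabs_pos. }
    generalize (peval_bound l y hy). lra.
Qed.

Lemma pabs2_nonneg L : 0 <= pabs2 L.
Proof.
  induction L as [|l L IH]; simpl; [lra|].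
  assert (0 <= pabs l). { induction l; simpl; [lra|]. generalize (Rabs_pos a); lra. }
  lra.
Qed.

Lemma W_ge3 s A : 0 <= s <= 1 -> 0 <= A -> 3 <= Wfun s A.
Proof.
  intros hs hA. unfold Wfun.
  assert (0 <= 1 - s) by lra.
  assert (0 <= 4 * A ^ 3 * (1 - s) ^ 3) by (repeat apply Rmult_le_pos; try apply pow_le; lra).
  assert (0 <= 12 * A ^ 2 * (1 - s) ^ 2 * (1 + s)) by (repeat apply Rmult_le_pos; try apply pow_le; lra).
  assert (0 <= A * (1 - s) * (11 + 38 * s + 11 * s ^ 2)) by (repeat apply Rmult_le_pos; try apply pow_le; nra).
  assert (3 <= 3 * (1 + s) * (1 + 8 * s + s ^ 2)) by nra.
  lra.
Qed.

Lemma U_ge0 s A : 0 <= s <= 1 -> 0 <= A -> 0 <= Ufun s A.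
Proof.
  intros hs hA. unfold Ufun.
  assert (0 <= 2 * A ^ 2 * (1 - s) ^ 2) by (repeat apply Rmult_le_pos; try apply pow_le; lra).
  assert (0 <= 5 * A * (1 - s) * (1 + s)) by (repeat apply Rmult_le_pos; lra).
  assert (0 <= 3 * (1 + 3 * s + s ^ 2)) by nra.
  lra.
Qed.

Lemma phi_ge0 s A : 0 <= s < 1 -> 0 <= A -> 0 <= phi s A.
Proof.
  intros hs hA. unfold phi. unfold Rdiv. apply Rmult_le_pos.
  apply Rmult_le_pos; [lra|apply U_ge0; lra].
  left; apply Rinv_0_lt_compat.
  apply Rmult_lt_0_compat; [lra|]. generalize (W_ge3 s A ltac:(lra) hA); lra.
Qed.

Definition C0 := pabs2 NL.

Lemma fexpr_bound s s0 u : 0 < s <= s0 -> s0 < 1 -> 0 <= u <= 1 ->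
  Rabs (fexpr s (1+u) u) <= u^2 * (C0 / (35 * (1 - s0)^4 * 81)).
Proof.
  intros hs hs0 hu.
  assert (hW := W_ge3 s (1+u) ltac:(lra) ltac:(lra)).
  assert (e := fexpr_id s u ltac:(lra) ltac:(lra) ltac:(lra)).
  set (Den := (1-s)^4*(1+s)^5*Wfun s (1+u)^4) in e.
  assert (hD : (1-s0)^4 * 81 <= Den).
  { unfold Den.
    assert ((1-s0)^4 <= (1-s)^4) by (apply pow_incr; lra).
    assert (1 <= (1+s)^5) by (apply pow_R1_Rle; lra).
    assert (3^4 <= Wfun s (1+u)^4) by (apply pow_incr; lra).
    assert (0 < (1-s0)^4) by (apply pow_lt; lra).
    replace ((1-s0)^4 * 81) with ((1-s0)^4 * 1 * 3^4) by ring.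
    apply Rmult_le_compat.
    - lra.
    - lra.
    - apply Rmult_le_compat; lra.
    - lra. }
  assert (hD0 : 0 < (1-s0)^4) by (apply pow_lt; lra).
  assert (hf : fexpr s (1+u) u = u^2 * peval2 NL s u / (35 * Den)).
  { rewrite <- e. field. lra. }
  rewrite hf. unfold Rdiv. rewrite Rabs_mult, Rabs_mult, Rabs_inv.
  rewrite (Rabs_right (u^2)) by (apply Rle_ge, pow2_ge_0).
  rewrite (Rabs_right (35*Den)) by lra.
  assert (hb := peval2_bound NL s u ltac:(apply Rabs_le; lra) ltac:(apply Rabs_le; lra)).
  fold C0 in hb.
  assert (0 <= u^2) by apply pow2_ge_0.
  rewrite Rmult_assoc. apply Rmult_le_compat_l; [lra|].
  apply Rmult_le_compat; try lra. apply Rabs_pos. left; apply Rinv_0_lt_compat; lra.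
  apply Rinv_le_contravar; lra.
Qed.

Lemma comp_exp (q : R -> R) dq a t :
  is_derive q (exp (-a*t)) dq -> is_derive (fun t => q (exp (-a*t))) t (-a*exp(-a*t)*dq).
Proof.
  intro H.
  assert (H2 : is_derive (fun t => exp (-a*t)) t (-a*exp(-a*t))) by (auto_derive; [exact I|ring]).
  generalize (is_derive_comp q (fun t => exp (-a*t)) t dq _ H H2). unfold scal; simpl; unfold mult; simpl.
  intro H3. replace (-a*exp(-a*t)*dq) with (-a*exp(-a*t)*dq) by ring. exact H3.
Qed.



Lemma lin_der (q : R -> R) dq c1 c2 x :
  is_derive q x dq -> is_derive (fun y => c1 + c2 * q y) x (c2 * dq).
Proof.
  intro H. 
  assert (H2 := is_derive_plus (fun _ => c1) (fun y => c2 * q y) x _ _ (is_derive_const c1 x)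
                 (is_derive_scal q x c2 dq H)).
  replace (c2 * dq) with (plus zero (scal c2 dq)). exact H2.
  unfold plus, zero, scal; simpl; unfold mult, plus; simpl. ring.
Qed.

Lemma Aco_ge1 a l : 0 < a -> 0 <= l -> 1 <= Acoef a l.
Proof.
  intros ha hl. unfold Acoef. rewrite <- sqrt_1 at 1. apply sqrt_le_1_alt.
  assert (0 <= 3 * l / a^2). { unfold Rdiv. apply Rmult_le_pos; [lra|]. left; apply Rinv_0_lt_compat, pow_lt; lra. }
  lra.
Qed.

Lemma sig_bounds a t : 0 < a -> 0 < t -> 0 < exp (-a*t) < 1.
Proof.
  intros ha ht. split. apply exp_pos. rewrite <- exp_0. apply exp_increasing. nra.
Qed.

Lemma Yfun_eq t a l : Yfun t a l = a * (-3 * Acoef a l - 36 * phi (exp (-a*t)) (Acoef a l)).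
Proof. unfold Yfun, phi. unfold Rdiv. ring. Qed.

Lemma Y_der a l t : 0 < a -> 0 <= l -> 0 < t ->
  is_derive (fun t => Yfun t a l) t (36 * a^2 * exp(-a*t) * dphi (exp(-a*t)) (Acoef a l)).
Proof.
  intros ha hl ht.
  set (A := Acoef a l).
  assert (hA : 1 <= A) by (apply Aco_ge1; auto).
  destruct (sig_bounds a t ha ht) as [hs1 hs2].
  assert (hW := W_ge3 (exp (-a*t)) A ltac:(lra) ltac:(lra)).
  assert (hp := phi_der (exp (-a*t)) A ltac:(lra) ltac:(lra)).
  assert (hl2 := lin_der (fun y => phi y A) _ (a * (-3*A)) (a * (-36)) _ hp).
  assert (hc := comp_exp _ _ a t hl2).
  eapply is_derive_ext; [|eapply is_derive_ext_loc; [apply filter_forall; intro; reflexivity|]].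
  2: { replace (36 * a^2 * exp(-a*t) * dphi (exp(-a*t)) A) with
        (-a * exp(-a*t) * (a * (-36) * dphi (exp (-a*t)) A)) by ring. exact hc. }
  intro x. simpl. rewrite Yfun_eq. fold A. ring.
Qed.

Lemma frac_le n N d d' : 0 <= n <= N -> 0 < d' <= d -> n / d <= N / d'.
Proof.
  intros hn hd. unfold Rdiv. apply Rmult_le_compat; try lra.
  left; apply Rinv_0_lt_compat; lra. apply Rinv_le_contravar; lra.
Qed.

Lemma h0_small s : 0 < s <= 1/2 -> Rabs (h0 s) <= 96 * s.
Proof.
  intro hs. unfold h0.
  assert (hd : 1/8 <= (1-s)^3*(1+s)^3).
  { assert ((1/2)^3 <= (1-s)^3) by (apply pow_incr; lra).
    assert (1 <= (1+s)^3) by (apply pow_R1_Rle; lra).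
    replace (1/8) with ((1/2)^3 * 1) by field. apply Rmult_le_compat; try lra; apply pow_le; lra. }
  rewrite Rabs_right.
  2: { apply Rle_ge. unfold Rdiv. apply Rmult_le_pos. assert (0 <= s^2) by apply pow2_ge_0. nra.
       left; apply Rinv_0_lt_compat; lra. }
  apply Rle_trans with (6*s^2*(1+s^2)/(1/8)).
  apply frac_le; [split; [assert (0 <= s^2) by apply pow2_ge_0; nra | lra] | lra].
  assert (s^2 <= s/2) by nra. assert (s^2 <= 1/4) by nra. 
  replace (6 * s ^ 2 * (1 + s ^ 2) / (1 / 8)) with (48 * s^2 * (1 + s^2)) by field.
  assert (0 <= s^2) by apply pow2_ge_0. nra.
Qed.

Lemma pabs_nonneg l : 0 <= pabs l.
Proof. induction l; simpl; [lra|]. generalize (Rabs_pos a); lra. Qed.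

Definition Pl : list R := [385; -189; 154; 54; -11; -9].
Definition Cp := pabs Pl.

Lemma g_small s : 0 < s <= 1/2 -> Rabs (g s) <= Cp * s.
Proof.
  intro hs. unfold g.
  assert (e : Pp s = peval Pl s) by (unfold Pp, Pl; simpl; ring).
  assert (hb : Rabs (Pp s) <= Cp) by (rewrite e; apply peval_bound; apply Rabs_le; lra).
  assert (hd : 35/2 <= 35*(1-s)*(1+s)^4).
  { assert (1 <= (1+s)^4) by (apply pow_R1_Rle; lra). nra. }
  rewrite Rabs_div by lra. rewrite Rabs_Ropp, Rabs_mult, (Rabs_right (s^2)) by (apply Rle_ge, pow2_ge_0).
  rewrite (Rabs_right (35 * (1 - s) * (1 + s) ^ 4)) by lra.
  apply Rle_trans with (s^2 * Cp / (35/2)).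
  apply frac_le; try lra. split. apply Rmult_le_pos; [apply pow2_ge_0|apply Rabs_pos].
  apply Rmult_le_compat_l; [apply pow2_ge_0|exact hb].
  assert (0 <= Cp) by (eapply Rle_trans; [apply Rabs_pos|exact hb]).
  replace (s ^ 2 * Cp / (35 / 2)) with ((2/35*s) * (Cp * s)) by field.
  assert (0 <= Cp * s) by (apply Rmult_le_pos; lra).
  assert (2/35*s <= 1) by lra. nra.
Qed.

Lemma decay a u : 0 < a -> 0 <= u -> forall eps, 0 < eps -> exists T, forall t, T < t ->
  Rabs (a^3*(h0 (exp(-a*t)) + u*g (exp(-a*t)))) < eps.
Proof.
  intros ha hu eps he.
  assert (hCp : 0 <= Cp) by (unfold Cp; apply pabs_nonneg).
  set (K := a^3*(96 + u*Cp) + 1).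
  assert (ha3 : 0 < a^3) by (apply pow_lt; lra).
  assert (hK : 0 < K) by (unfold K; assert (0 <= u*Cp) by (apply Rmult_le_pos; lra); nra).
  set (d := Rmin (1/2) (eps/K)).
  assert (hd : 0 < d) by (unfold d; apply Rmin_glb_lt; [lra| apply Rdiv_lt_0_compat; lra]).
  exists (- ln d / a). intros t ht.
  set (s := exp (-a*t)).
  assert (hs : 0 < s < d).
  { split. apply exp_pos. unfold s. rewrite <- (exp_ln d hd). apply exp_increasing.
    apply (Rmult_lt_compat_l a) in ht; [|lra]. replace (a * (- ln d / a)) with (- ln d) in ht by (field; lra). lra. }
  assert (hd1 : d <= 1/2) by apply Rmin_l.
  assert (hd2 : d <= eps/K) by apply Rmin_r.
  assert (h1 := h0_small s ltac:(lra)). assert (h2 := g_small s ltac:(lra)).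
  rewrite Rabs_mult, (Rabs_right (a^3)) by lra.
  assert (Rabs (h0 s + u * g s) <= (96 + u*Cp) * s).
  { eapply Rle_trans; [apply Rabs_triang|]. rewrite Rabs_mult, (Rabs_right u) by lra.
    assert (u * Rabs (g s) <= u * (Cp * s)) by (apply Rmult_le_compat_l; lra). lra. }
  assert (a^3 * Rabs (h0 s + u * g s) <= a^3 * ((96 + u*Cp) * s)) by (apply Rmult_le_compat_l; lra).
  assert (a^3 * ((96 + u*Cp) * s) < K * d).
  { unfold K. assert (0 <= a^3*(96+u*Cp)) by (assert (0 <= u*Cp) by (apply Rmult_le_pos; lra); nra). nra. }
  assert (K * d <= eps). { apply Rle_trans with (K * (eps/K)). apply Rmult_le_compat_l; lra. right; field; lra. }
  lra.
Qed.

Lemma q_der a u y : -1 < y < 1 ->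
  is_derive (fun y => a^3*(h0 y + u*g y)) y (a^3*(dh0 y + u*dg y)).
Proof.
  intro hy. assert (h1 : 1 - y <> 0) by lra. assert (h2 : 1 + y <> 0) by lra.
  unfold h0, dh0, g, dg, Pp, Pgp. auto_derive.
  - nz.
  - field. nz.
Qed.

Lemma key a H S l : 0 < a -> 0 < S -> 0 <= l -> IsSolH a l (fun S => H S l) ->
  Acoef a l - 1 <= 1 ->
  Rabs (H S l - a^3*(h0 (exp(-a*S)) + (Acoef a l - 1)*g (exp(-a*S))))
    <= (a^4 * (C0 / (35*(1-exp(-a*S))^4*81)) / (4*(3*a))) * (Acoef a l - 1)^2.
Proof.
  intros ha hS hl [hode hlim] hu1.
  set (s0 := exp(-a*S)). set (u := Acoef a l - 1).
  assert (hA1 := Aco_ge1 a l ha hl).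
  assert (hu0 : 0 <= u) by (unfold u; lra).
  assert (eA : Acoef a l = 1 + u) by (unfold u; ring).
  destruct (sig_bounds a S ha hS) as [hs01 hs02]. fold s0 in hs01, hs02.
  set (CC := C0 / (35*(1-s0)^4*81)).
  assert (hCC : 0 <= CC).
  { unfold CC, Rdiv. apply Rmult_le_pos. apply pabs2_nonneg.
    left; apply Rinv_0_lt_compat. assert (0 < (1-s0)^4) by (apply pow_lt; lra). lra. }
  set (Rf := fun t => H t l - a^3*(h0 (exp(-a*t)) + u*g (exp(-a*t)))).
  set (dR := fun t => Derive (fun S => H S l) t - (-a*exp(-a*t)*(a^3*(dh0 (exp(-a*t)) + u*dg (exp(-a*t)))))).
  set (Fr := fun t => a^4 * fexpr (exp(-a*t)) (1+u) u).
  assert (hc := comparison S (3*a) (a^4 * (u^2 * CC)) Rf (fun t => Yfun t a l) Fr dR hS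
     ltac:(lra) ltac:(apply Rmult_le_pos; [apply pow_le; lra| apply Rmult_le_pos; [apply pow2_ge_0|exact hCC]])).
  replace (a ^ 4 * CC / (4 * (3 * a)) * u ^ 2) with (a ^ 4 * (u ^ 2 * CC) / (4 * (3 * a))) by (field; lra).
  apply hc; clear hc.
  -
    intros t ht. destruct (sig_bounds a t ha ht) as [hs1 hs2].
    destruct (hode t ht) as [dY [dh [hY [hH he]]]].
    apply is_derive_Reals in hH.
    assert (eD : Derive (fun S => H S l) t = dh) by (apply is_derive_unique; exact hH).
    unfold dR. rewrite eD.
    apply (is_derive_minus (fun t => H t l) (fun t => a^3*(h0 (exp(-a*t)) + u*g (exp(-a*t)))) t).
    exact hH. apply (comp_exp (fun y => a^3*(h0 y + u*g y))). apply q_der. lra.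
  - intros t ht. apply (ex_derive_continuous (K:=R_AbsRing) (V:=R_NormedModule)).
    eexists. apply Y_der; lra.
  - intros t ht. destruct (sig_bounds a t ha ht) as [hs1 hs2].
    destruct (hode t ht) as [dY [dh [hY [hH he]]]].
    apply is_derive_Reals in hH. apply is_derive_Reals in hY.
    assert (eD : Derive (fun S => H S l) t = dh) by (apply is_derive_unique; exact hH).
    assert (eY : dY = 36 * a^2 * exp(-a*t) * dphi (exp(-a*t)) (Acoef a l)).
    { rewrite <- (is_derive_unique _ _ _ hY). apply is_derive_unique. apply Y_der; lra. }
    unfold dR, Rf, Fr. rewrite eD. rewrite eY in he. rewrite Yfun_eq in he |- *.
    rewrite eA in he |- *. rewrite <- he. unfold fexpr. ring.
  - intros t ht. rewrite Yfun_eq.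
    destruct (sig_bounds a t ha ltac:(lra)) as [hs1 hs2].
    assert (0 <= phi (exp (-a*t)) (Acoef a l)) by (apply phi_ge0; lra).
    nra.
  - intros t ht. destruct (sig_bounds a t ha ltac:(lra)) as [hs1 hs2].
    assert (hle : exp (-a*t) <= s0).
    { unfold s0. destruct (Req_dec t S) as [->|ne]; [lra|]. left; apply exp_increasing. nra. }
    unfold Fr. rewrite Rabs_mult, (Rabs_right (a^4)) by (apply Rle_ge, pow_le; lra).
    apply Rmult_le_compat_l; [apply pow_le; lra|].
    apply fexpr_bound; lra.
  - intros eps he.
    destruct (hlim (eps/2)) as [T1 hT1]; [lra|].
    destruct (decay a u ha hu0 (eps/2)) as [T2 hT2]; [lra|].
    exists (Rmax T1 T2). intros t ht.
    assert (h1 := hT1 t ltac:(generalize (Rmax_l T1 T2); lra)).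
    assert (h2 := hT2 t ltac:(generalize (Rmax_r T1 T2); lra)).
    unfold Rf. unfold Rminus. eapply Rle_lt_trans; [apply Rabs_triang|]. rewrite Rabs_Ropp. lra.
Qed.

Theorem mainTheorem5 (a : R) (H : R -> R -> R) :
  0 < a ->
  (forall l, 0 <= l -> IsSolH a l (fun S => H S l)) ->
  forall S, 0 < S ->
  let s := exp (- a * S) in
  Fcal H S 0 = 2 * a ^ 3 * s ^ 2 * (1 + s ^ 2) / (1 - s ^ 2) ^ 3 /\
  limit1_in (fun l => (Fcal H S l - Fcal H S 0) / l) (fun l => 0 < l)
    (- (a * s ^ 2 * (385 - 189 * s + 154 * s ^ 2 + 54 * s ^ 3 - 11 * s ^ 4 - 9 * s ^ 5))
       / (70 * (1 - s) * (1 + s) ^ 4)) 0.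
Proof.
  intros ha hsol S hS s.
  destruct (sig_bounds a S ha hS) as [hs1 hs2]. fold s in hs1, hs2.
  assert (ha2 : 0 < a^2) by (apply pow_lt; lra).
  assert (A0 : Acoef a 0 = 1).
  { unfold Acoef. replace (1 + 3 * 0 / a^2) with 1 by (field; lra). apply sqrt_1. }
  set (K := a ^ 4 * (C0 / (35 * (1 - exp (- a * S)) ^ 4 * 81)) / (4 * (3 * a))).
  assert (hK : 0 <= K).
  { unfold K. fold s. unfold Rdiv.
    assert (0 < (1-s)^4) by (apply pow_lt; lra).
    apply Rmult_le_pos; [apply Rmult_le_pos; [apply pow_le; lra | apply Rmult_le_pos; [apply pabs2_nonneg | left; apply Rinv_0_lt_compat; lra]] | left; apply Rinv_0_lt_compat; lra]. }
  assert (k0 := key a H S 0 ha hS (Rle_refl 0) (hsol 0 (Rle_refl 0)) ltac:(rewrite A0; lra)).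
  fold K in k0. fold s in k0. rewrite A0 in k0.
  replace ((1 - 1) ^ 2) with 0 in k0 by ring. rewrite Rmult_0_r in k0.
  assert (eH0 : H S 0 = a^3 * h0 s).
  { assert (Rabs (H S 0 - a ^ 3 * (h0 s + (1 - 1) * g s)) = 0) by (generalize (Rabs_pos (H S 0 - a ^ 3 * (h0 s + (1 - 1) * g s))); lra).
    apply Rabs_eq_0 in H0. replace (a^3 * h0 s) with (a ^ 3 * (h0 s + (1 - 1) * g s)) by ring. lra. }
  assert (et : - (a * s ^ 2 * (385 - 189 * s + 154 * s ^ 2 + 54 * s ^ 3 - 11 * s ^ 4 - 9 * s ^ 5))
       / (70 * (1 - s) * (1 + s) ^ 4) = a * g s / 2).
  { unfold g, Pp. field. repeat split; try lra; try (apply pow_nonzero; lra). }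
  split.
  { unfold Fcal. rewrite eH0. unfold h0. assert (s^2 < 1) by nra.
    field. repeat split; try lra; try (apply pow_nonzero; lra). }
  rewrite et. clear et.
  set (C2 := (2*K/a^2 + a*Rabs (g s))/4 + 1).
  assert (hC2 : 1 <= C2).
  { unfold C2. assert (0 <= 2*K/a^2) by (unfold Rdiv; apply Rmult_le_pos; [lra| left; apply Rinv_0_lt_compat; lra]).
    assert (0 <= a * Rabs (g s)) by (apply Rmult_le_pos; [lra|apply Rabs_pos]). lra. }
  unfold limit1_in, limit_in. simpl. unfold R_dist. intros eps he.
  exists (Rmin (2*a^2/3) (eps * 2*a^2/(3*C2))). split.
  { apply Rmin_glb_lt. apply Rdiv_lt_0_compat; lra. apply Rdiv_lt_0_compat; nra. }
  intros l [hl hd]. rewrite Rminus_0_r, Rabs_right in hd by lra.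
  assert (hl1 : l < 2*a^2/3) by (generalize (Rmin_l (2*a^2/3) (eps * 2*a^2/(3*C2))); lra).
  assert (hl2 : l < eps * 2*a^2/(3*C2)) by (generalize (Rmin_r (2*a^2/3) (eps * 2*a^2/(3*C2))); lra).
  set (u := Acoef a l - 1).
  assert (hx : 0 < 3 * l / a^2) by (apply Rdiv_lt_0_compat; lra).
  assert (esq : (1+u)^2 = 1 + 3*l/a^2).
  { unfold u, Acoef. replace (1 + (sqrt (1 + 3 * l / a ^ 2) - 1)) with (sqrt (1 + 3 * l / a ^ 2)) by ring.
    rewrite <- Rsqr_pow2. apply Rsqr_sqrt. lra. }
  assert (hu0 : 0 < u).
  { unfold u, Acoef. assert (1 < sqrt (1 + 3 * l / a ^ 2)). { rewrite <- sqrt_1 at 1. apply sqrt_lt_1_alt. lra. } lra. }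
  assert (el : l = a^2 * (u^2 + 2*u) / 3).
  { assert (3*l/a^2 = u^2 + 2*u) by (replace (u^2+2*u) with ((1+u)^2 - 1) by ring; rewrite esq; ring).
    replace (u^2 + 2*u) with (3*l/a^2) by (rewrite H0; ring). field. lra. }
  assert (hub : u <= 3*l/(2*a^2)).
  { rewrite el. field_simplify; [|lra]. assert (0 <= u^2) by apply pow2_ge_0. lra. }
  assert (hu1 : u <= 1).
  { apply Rle_trans with (3*l/(2*a^2)); auto. apply (Rmult_le_reg_l (2*a^2)); [lra|].
    replace (2 * a ^ 2 * (3 * l / (2 * a ^ 2))) with (3*l) by (field; lra). lra. }
  assert (kl := key a H S l ha hS ltac:(lra) (hsol l ltac:(lra)) hu1).
  fold K in kl. fold s in kl. fold u in kl.
  set (Rr := H S l - a ^ 3 * (h0 s + u * g s)) in kl.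
  assert (eF : (Fcal H S l - Fcal H S 0) / l - a * g s / 2 = (2*Rr - a^3*u^2*g s)/(2*a^2*u*(u+2))).
  { unfold Fcal. rewrite eH0. replace (H S l) with (Rr + a ^ 3 * (h0 s + u * g s)) by (unfold Rr; ring).
    rewrite el. field. repeat split; lra. }
  rewrite eF.
  assert (hb : Rabs (2*Rr - a^3*u^2*g s) <= 2*K*u^2 + a^3*u^2*Rabs (g s)).
  { unfold Rminus. eapply Rle_trans; [apply Rabs_triang|]. rewrite Rabs_Ropp, Rabs_mult, Rabs_mult.
    rewrite (Rabs_right 2) by lra. rewrite (Rabs_right (a^3*u^2)).
    lra. apply Rle_ge, Rmult_le_pos. apply pow_le; lra. apply pow2_ge_0. }
  rewrite Rabs_div by (assert (0 < 2*a^2*u*(u+2)) by (repeat apply Rmult_lt_0_compat; lra); lra).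
  rewrite (Rabs_right (2*a^2*u*(u+2))) by (assert (0 < 2*a^2*u*(u+2)) by (repeat apply Rmult_lt_0_compat; lra); lra).
  apply Rle_lt_trans with ((2*K*u^2 + a^3*u^2*Rabs (g s)) / (4*a^2*u)).
  { apply frac_le. split; [apply Rabs_pos|exact hb]. split. nra.
    assert (0 < a^2*u) by nra. nra. }
  replace ((2*K*u^2 + a^3*u^2*Rabs (g s)) / (4*a^2*u)) with ((C2 - 1) * u) by (unfold C2; field; lra).
  apply Rlt_le_trans with (C2 * (3*l/(2*a^2))).
  { assert ((C2 - 1) * u < C2 * u) by lra. assert (C2 * u <= C2 * (3*l/(2*a^2))) by (apply Rmult_le_compat_l; lra). lra. }
  apply Rle_trans with (C2 * (3*(eps * 2*a^2/(3*C2))/(2*a^2))).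
  { apply Rmult_le_compat_l; [lra|]. unfold Rdiv. apply Rmult_le_compat_r. left; apply Rinv_0_lt_compat; lra. lra. }
  right. field. lra.
Qed.
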